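(* Fix a nonempty directed edge set $\mathcal{E}$ and a randomized design with $0<\mathbb{E}[z_i]<1$ for all $i$. Then there is no choice of deterministic weights ${\bf w},{\bf v}$ such that the individually weighted linear estimator $\sum_i(w_iz_i+v_i(1-z_i))Y_i({\bf z})$ has expectation equal to $\mathrm{AIE}$ for every choice of real parameters $\alpha,\beta,\{\gamma_{ki}\}_{(k,i)\in\mathcal{E}}$ of the heterogeneous additive network effects model.
   Context: Population $[n]$; random treatment vector ${\bf z}\in\{0,1\}^n$ drawn from a randomized design. Heterogeneous additive network effects model: $Y_i({\bf z})=\alpha_i+\beta_iz_i+\sum_{k\in[n]}\gamma_{ki}z_k$ with deterministic real parameters, $\gamma_{ki}=0$ unless $(k,i)\in\mathcal{E}$, where $\mathcal{E}$ is a set of ordered pairs $(k,i)$, $k\neq i$. Average interference effect: $\mathrm{AIE}=\frac1n\sum_i(Y_i({\bf e}_{[n]\setminus\{i\}})-Y_i({\bf 0}))=\frac1n\sum_{(k,i)\in\mathcal{E}}\gamma_{ki}$, where ${\bf e}_S$ is the indicator vector of $S\subseteq[n]$. *)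

(* Defs.v *)
From HB Require Import structures.
From mathcomp Require Import all_boot all_order all_algebra.
Set Implicit Arguments. Unset Strict Implicit. Unset Printing Implicit Defensive.
Import Order.TTheory GRing.Theory Num.Theory.
Local Open Scope ring_scope.

(* treatment vectors z in {0,1}^n, z i = true means unit i is treated *)
Notation treat n := {ffun 'I_n -> bool}.

Definition is_design (R : numDomainType) n (p : treat n -> R) : Prop :=
  (forall z, 0 <= p z) /\ \sum_(z : treat n) p z = 1.

Definition expect (R : numDomainType) n (p : treat n -> R) (f : treat n -> R) : R :=
  \sum_(z : treat n) p z * f z.

Definition zr (R : numDomainType) n (z : treat n) (i : 'I_n) : R := (z i)%:R.

Definition Yout (R : numDomainType) n (alpha beta : 'I_n -> R)
  (gamma : 'I_n -> 'I_n -> R) (z : treat n) (i : 'I_n) : R :=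
  alpha i + beta i * zr R z i + \sum_(k : 'I_n) gamma k i * zr R z k.

Definition AIE (R : numFieldType) n (E : {set 'I_n * 'I_n})
  (gamma : 'I_n -> 'I_n -> R) : R :=
  n%:R^-1 * \sum_(e in E) gamma e.1 e.2.

Definition iwl_est (R : numDomainType) n (w v : 'I_n -> R) (alpha beta : 'I_n -> R)
  (gamma : 'I_n -> 'I_n -> R) (z : treat n) : R :=
  \sum_(i : 'I_n) (w i * zr R z i + v i * (1 - zr R z i)) * Yout alpha beta gamma z i.

(* Main.v *)
Require Import Defs.
From HB Require Import structures.
From mathcomp Require Import all_boot all_order all_algebra.
From mathcomp Require Import ring.
Import Order.TTheory GRing.Theory Num.Theory.
Local Open Scope ring_scope.

Lemma col_est (R : realFieldType) n (w v : 'I_n -> R) alpha beta gamma (i : 'I_n) z :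
  (forall j, j != i -> alpha j = 0) -> (forall j, j != i -> beta j = 0) ->
  (forall k j, j != i -> gamma k j = 0) ->
  iwl_est w v alpha beta gamma z =
  (w i * zr R z i + v i * (1 - zr R z i)) * Yout alpha beta gamma z i.
Proof.
move=> ha hb hg; rewrite /iwl_est (bigD1 i) //= big1 ?addr0 // => j hj.
rewrite /Yout ha // hb // big1 ?mul0r ?add0r ?mulr0 // => k _.
by rewrite hg // mul0r.
Qed.

Theorem theorem5 (R : realFieldType) (n : nat) (E : {set 'I_n * 'I_n})
  (p : treat n -> R) :
  (forall e, e \in E -> e.1 != e.2) ->
  E != set0 ->
  is_design p ->
  (forall i : 'I_n, 0 < expect p (fun z => zr R z i) < 1) ->
  ~ (exists w v : 'I_n -> R,
       forall (alpha beta : 'I_n -> R) (gamma : 'I_n -> 'I_n -> R),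
         (forall k i, (k, i) \notin E -> gamma k i = 0) ->
         expect p (iwl_est w v alpha beta gamma) = AIE E gamma).
Proof.
move=> _ /set0Pn [[k i] kiE] [_ p1] hpi [w [v H]].
set pi := expect p (fun z => zr R z i).
have /andP [pi0 pi1] := hpi i.
have g0 : forall k' i', (k', i') \notin E -> (fun _ _ : 'I_n => 0 : R) k' i' = 0 by [].
have Ha := H (fun j => (j == i)%:R) (fun _ => 0) (fun _ _ => 0) g0.
have Hb := H (fun _ => 0) (fun j => (j == i)%:R) (fun _ _ => 0) g0.
have A0 : forall g, AIE E (fun _ _ : 'I_n => 0 : R) = 0 -> True by [].
have Z : AIE E (fun _ _ : 'I_n => 0 : R) = 0 by rewrite /AIE big1 ?mulr0.
rewrite Z /expect in Ha Hb.
have Ea : w i * pi + v i * (1 - pi) = 0.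
  rewrite -Ha /pi /expect -{1}p1 mulr_sumr mulrBr mulr_sumr mulr_sumr -sumrB -big_split /=.
  apply: eq_bigr => z _.
  rewrite (@col_est R n w v _ _ _ i) //; last by move=> j /negbTE ->.
  rewrite /Yout eqxx [\sum_(_ < _) _]big1; last by move=> ? _; rewrite mul0r.
  rewrite /=; ring.
have Eb : w i * pi = 0.
  rewrite -Hb /pi /expect mulr_sumr; apply: eq_bigr => z _.
  rewrite (@col_est R n w v _ _ _ i) //; last by move=> j /negbTE ->.
  rewrite /Yout eqxx [\sum_(_ < _) _]big1; last by move=> ? _; rewrite mul0r.
  by rewrite /zr; case: (z i) => /=; ring.
have wi : w i = 0 by move: Eb => /eqP; rewrite mulf_eq0 (gt_eqF pi0) orbF => /eqP.
have vi : v i = 0.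
  move: Ea; rewrite wi mul0r add0r => /eqP; rewrite mulf_eq0 subr_eq0 (gt_eqF pi1) orbF.
  by move/eqP.
pose gam := fun k' j => (((k', j) == (k, i)) : bool)%:R : R.
have hg : forall k' i', (k', i') \notin E -> gam k' i' = 0.
  move=> k' i' hn; rewrite /gam; case: eqP => // e; by move: hn; rewrite e kiE.
have Hg := H (fun _ => 0) (fun _ => 0) gam hg.
have L : expect p (iwl_est w v (fun _ => 0) (fun _ => 0) gam) = 0.
  rewrite /expect big1 // => z _.
  rewrite (@col_est R n w v _ _ _ i) // ?wi ?vi ?mul0r ?add0r ?mul0r ?mulr0 //.
  by move=> k' j hj; rewrite /gam xpair_eqE (negbTE hj) andbF.
have : AIE E gam = n%:R^-1.
  rewrite /AIE (bigD1 (k, i)) //= big1 ?addr0 /gam ?eqxx ?mulr1 //.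
  by move=> e /andP [_ /negbTE]; rewrite -surjective_pairing => ->.
rewrite -Hg L => /esym /eqP; rewrite invr_eq0 pnatr_eq0.
have n0 : (0 < n)%N := leq_ltn_trans (leq0n _) (ltn_ord k).
by rewrite (gtn_eqF n0).
Qed.
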